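(* Let $\gamma_1,\ldots,\gamma_m\in\mathbb R^{m-n}$ be such that $L=\mathbb Z\langle\gamma_1,\ldots,\gamma_m\rangle$ is a lattice of rank $m-n$, let $\delta\in\mathbb R^{m-n}$, and let $$\mathcal Z_{\Gamma,\delta}=\Bigl\{\mathbf z\in\mathbb C^m\colon\sum_{k=1}^m\gamma_{jk}|z_k|^2=\delta_j,\ 1\le j\le m-n\Bigr\},$$ on which the torus $T_\Gamma=\{(e^{2\pi i\langle\gamma_1,\varphi\rangle},\ldots,e^{2\pi i\langle\gamma_m,\varphi\rangle})\colon\varphi\in\mathbb R^{m-n}\}\cong\mathbb R^{m-n}/L^*$ acts coordinatewise. Then the stabiliser subgroup of $\mathbf z\in\mathcal Z_{\Gamma,\delta}$ under the action of $T_\Gamma$ is $L^*_{\mathbf z}/L^*$. Furthermore, if $\mathcal Z_{\Gamma,\delta}$ is nondegenerate, then all these stabilisers are finite, i.e. the action of $T_\Gamma$ on $\mathcal Z_{\Gamma,\delta}$ is almost free.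
   Context: Here $\gamma_{jk}$ denotes the $j$th coordinate of $\gamma_k$. For a subgroup $M\subset\mathbb R^{m-n}$, $M^*=\{\lambda^*\in\mathbb R^{m-n}\colon\langle\lambda^*,\lambda\rangle\in\mathbb Z\text{ for all }\lambda\in M\}$; $L_{\mathbf z}=\mathbb Z\langle\gamma_i\colon z_i\ne0\rangle\subset L$, so $L^*\subset L^*_{\mathbf z}$ and $L^*_{\mathbf z}/L^*\subset\mathbb R^{m-n}/L^*=T_\Gamma$. Nondegenerate means the gradients of the $m-n$ defining functions are linearly independent at every point of $\mathcal Z_{\Gamma,\delta}$. *)

(* Defs.v *)
From mathcomp Require Import all_boot all_order all_algebra.
From mathcomp Require Import all_classical all_reals all_analysis.
From mathcomp Require Import complex.
Set Implicit Arguments. Unset Strict Implicit. Unset Printing Implicit Defensive.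
Import Order.TTheory GRing.Theory Num.Theory.
Local Open Scope ring_scope.
Local Open Scope classical_set_scope.

Section Defs.
Variable R : realType.

Definition dotv (d : nat) (u v : 'rV[R]_d) : R := \sum_(j < d) u 0 j * v 0 j.

Definition Zspan_on (m d : nat) (gamma : 'I_m -> 'rV[R]_d) (P : pred 'I_m)
  : set 'rV[R]_d :=
  [set v | exists c : 'I_m -> int, v = \sum_(k < m | P k) (gamma k) *~ (c k)].

Definition Zspan (m d : nat) (gamma : 'I_m -> 'rV[R]_d) := Zspan_on gamma predT.

Definition Zspan_lattice_of_rank (m d : nat) (gamma : 'I_m -> 'rV[R]_d)
  (r : nat) : Prop :=
  (exists2 eps : R, 0 < eps &
     forall v, Zspan gamma v -> v != 0 -> eps <= `|v|) /\
  \rank (\matrix_(k < m, j < d) gamma k 0 j) = r.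

Definition dual_grp (d : nat) (M : set 'rV[R]_d) : set 'rV[R]_d :=
  [set l | forall v, M v -> exists z : int, dotv l v = z%:~R].

Definition L_of (m d : nat) (gamma : 'I_m -> 'rV[R]_d) (z : 'rV[R[i]]_m) :=
  Zspan_on gamma (fun k => z 0 k != 0).

Definition csq (w : R[i]) : R := (complex.Re w) ^+ 2 + (complex.Im w) ^+ 2.

Definition Zset (m d : nat) (gamma : 'I_m -> 'rV[R]_d) (delta : 'rV[R]_d)
  : set 'rV[R[i]]_m :=
  [set z | forall j : 'I_d, \sum_(k < m) gamma k 0 j * csq (z 0 k) = delta 0 j].

Definition expi (theta : R) : R[i] := (cos theta +i* sin theta)%C.

Definition torus_map (m d : nat) (gamma : 'I_m -> 'rV[R]_d) (phi : 'rV[R]_d)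
  : 'rV[R[i]]_m :=
  \row_(k < m) expi (2 * pi * dotv (gamma k) phi).

Definition torus (m d : nat) (gamma : 'I_m -> 'rV[R]_d) : set 'rV[R[i]]_m :=
  range (torus_map gamma).

Definition tact (m : nat) (t z : 'rV[R[i]]_m) : 'rV[R[i]]_m :=
  \row_(k < m) (t 0 k * z 0 k).

Definition stabiliserT (m d : nat) (gamma : 'I_m -> 'rV[R]_d) (z : 'rV[R[i]]_m)
  : set 'rV[R[i]]_m :=
  [set t | torus gamma t /\ tact t z = z].

Definition realify (m : nat) (z : 'rV[R[i]]_m) : 'rV[R]_(m + m) :=
  row_mx (\row_(k < m) complex.Re (z 0 k)) (\row_(k < m) complex.Im (z 0 k)).

Definition deffun (m d : nat) (gamma : 'I_m -> 'rV[R]_d) (delta : 'rV[R]_d)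
  (j : 'I_d) (x : 'rV[R]_(m + m)) : R :=
  \sum_(k < m) gamma k 0 j * (x 0 (lshift m k) ^+ 2 + x 0 (rshift m k) ^+ 2)
  - delta 0 j.

Definition grad (N : nat) (f : 'rV[R]_N -> R) (x : 'rV[R]_N) : 'rV[R]_N :=
  \row_(i < N) ('D_('e_i) f x).

Definition nondegenerateZ (m d : nat) (gamma : 'I_m -> 'rV[R]_d)
  (delta : 'rV[R]_d) : Prop :=
  forall z, Zset gamma delta z ->
    row_free (\matrix_(j < d, i < m + m) grad (deffun gamma delta j) (realify z) 0 i).

End Defs.

(* Main.v *)
Require Import Defs.
From mathcomp Require Import all_boot all_order all_algebra.
From mathcomp Require Import all_classical all_reals all_analysis.
From mathcomp Require Import complex.
From mathcomp Require Import ring lra.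
Import Order.TTheory GRing.Theory Num.Theory numFieldNormedType.Exports.
Local Open Scope ring_scope.
Local Open Scope classical_set_scope.

Section S.
Variable R : realType.


Lemma expiD (x y : R) : expi (x + y) = expi x * expi y.
Proof.
by rewrite /expi sinD cosD /GRing.mul /= /mulc /=; congr Complex; rewrite addrC.
Qed.

Lemma expi2pin (n : int) : expi (2 * pi * n%:~R) = 1 :> R[i].
Proof.
have P1 : forall k : nat, expi (2 * pi * k%:R) = 1 :> R[i].
  elim=> [|k IH]; first by rewrite mulr0 /expi cos0 sin0.
  have -> : (k.+1%:R : R) = k%:R + 1 by rewrite natr1.
  rewrite mulrDr mulr1 expiD IH mul1r /expi mulr_natl cos2pi sin2pi //.
case: n => k; first exact: P1.
have := P1 k.+1; rewrite NegzE /expi rmorphN /= mulrN cosN sinN.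
by case => -> ->; rewrite oppr0.
Qed.

Lemma cos_eq1 (a : R) : 0 <= a < pi *+ 2 -> cos a = 1 -> a = 0.
Proof.
move=> /andP[a0 a2] ca.
have pi0 : 0 < pi :> R := pi_gt0 R.
case: (leP a pi) => api.
  apply: (@cos_inj R); rewrite ?in_itv /= ?a0 ?api ?lexx ?ltW //.
  by rewrite ca cos0.
have : pi *+ 2 - a = 0.
  apply: (@cos_inj R).
  - rewrite in_itv /= subr_ge0 ltW //= lerBlDr mulr2n lerD2l ltW //.
  - by rewrite in_itv /= lexx ltW.
  - by rewrite cos0 addrC cosD2pi cosN.
move/eqP; rewrite subr_eq0 => /eqP h; move: a2; by rewrite h ltxx.
Qed.

Lemma expi2pi_eq1 (x : R) : expi (2 * pi * x) = 1 -> exists n : int, x = n%:~R.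
Proof.
move=> h; exists (Num.floor x).
set y := x - (Num.floor x)%:~R.
have y0 : 0 <= y by rewrite subr_ge0 Num.Theory.floor_le.
have y1 : y < 1 by rewrite ltrBlDr addrC -[1]/(1%:~R) -intrD Num.Theory.floorD1_gt.
have hx : x = y + (Num.floor x)%:~R by rewrite /y subrK.
suff : y = 0 by rewrite /y => /eqP; rewrite subr_eq0 => /eqP.
move: h; rewrite {1}hx mulrDr expiD expi2pin mulr1 /expi => -[c _].
have pi0 : 0 < pi :> R := pi_gt0 R.
have h2 : 0 <= 2 * pi * y < pi *+ 2.
  apply/andP; split; nra.
move: (cos_eq1 _ h2 c) => /eqP; rewrite !mulf_eq0 pnatr_eq0 (gt_eqF pi0) /=.
by move/eqP.
Qed.

Lemma dotvC d (u v : 'rV[R]_d) : dotv u v = dotv v u.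
Proof. by apply: eq_bigr => j _; rewrite mulrC. Qed.

Lemma mxzE p q (A : 'M[R]_(p, q)) (c : int) i j : (A *~ c) i j = A i j *~ c.
Proof.
case: c => n; first exact: mulmxnE.
by rewrite NegzE !mulrNz mxE mulmxnE.
Qed.

Lemma dotv_zsum d m (l : 'rV[R]_d) (g : 'I_m -> 'rV[R]_d) (P : pred 'I_m) (c : 'I_m -> int) :
  dotv l (\sum_(k < m | P k) g k *~ c k) = \sum_(k < m | P k) dotv l (g k) *~ c k.
Proof.
rewrite /dotv; under eq_bigr => j _ do rewrite summxE mulr_sumr.
rewrite exchange_big /=; apply: eq_bigr => k _.
by rewrite mulrz_suml; apply: eq_bigr => j _; rewrite mxzE mulrzAr.
Qed.

Lemma part1 m d (gamma : 'I_m -> 'rV[R]_d) z :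
  stabiliserT gamma z = torus_map gamma @` dual_grp (L_of gamma z).
Proof.
apply/seteqP; split.
- move=> t [[phi _ <-] ht]; exists phi => //.
  have hk : forall k, z 0 k != 0 -> exists n : int, dotv phi (gamma k) = n%:~R.
    move=> k zk; apply: expi2pi_eq1; rewrite dotvC.
    move/rowP: ht => /(_ k); rewrite !mxE => e.
    by apply: (mulIf zk); rewrite mul1r.
  move=> v [c ->]; rewrite dotv_zsum.
  apply: (big_ind (fun x : R => exists n : int, x = n%:~R)).
  + by exists 0.
  + by move=> x y [a ->] [b ->]; exists (a + b); rewrite intrD.
  + move=> k zk; have [n ->] := hk k zk; exists (n * c k).
    by rewrite intrM mulrzr.
- move=> t [phi hphi <-]; split; first by exists phi.
  apply/rowP => k; rewrite !mxE.
  have [->|zk] := eqVneq (z 0 k) 0; first by rewrite mulr0.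
  have gk : L_of gamma z (gamma k).
    exists (fun i => (i == k)%:Z).
    rewrite (bigD1 k) //= eqxx mulr1z big1 ?addr0 // => i /andP[_ /negbTE ->].
    by rewrite mulr0z.
  have [n hn] := hphi _ gk.
  by rewrite dotvC hn expi2pin mul1r.
Qed.


Lemma is_derive_coord N (l : 'I_N) (x v : 'rV[R]_N) :
  is_derive x v (fun y : 'rV[R]_N => y 0 l) (v 0 l).
Proof.
have L : (fun h : R => h^-1 *: (((fun y : 'rV[R]_N => y 0 l) \o shift x) (h *: v) - x 0 l))
   @ 0^' --> v 0 l.
  apply: (@cvg_trans _ ((fun _ : R => v 0 l) @ 0^')); last exact: cvg_cst.
  apply: near_eq_cvg; near=> h.
  rewrite /= !mxE addrK /GRing.scale /= mulrA mulVf ?mul1r //.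
  near: h; exact: nbhs_dnbhs_neq.
apply: DeriveDef; first by apply/cvg_ex; exists (v 0 l).
exact: cvg_lim L.
Unshelve. all: by end_near.
Qed.

Lemma derive_deffun m d (gamma : 'I_m -> 'rV[R]_d) (delta : 'rV[R]_d) j
  (x v : 'rV[R]_(m + m)) :
  'D_v (deffun gamma delta j) x =
  \sum_(k < m) gamma k 0 j * ((x 0 (lshift m k) * v 0 (lshift m k)) *+ 2
                             + (x 0 (rshift m k) * v 0 (rshift m k)) *+ 2).
Proof.
pose p l := fun y : 'rV[R]_(m + m) => y 0 l.
have E : deffun gamma delta j =
  \sum_(k < m) (gamma k 0 j *: (p (lshift m k) ^+ 2 + p (rshift m k) ^+ 2))
  - cst (delta 0 j).
  apply/funext => y; rewrite /deffun /= fct_sumE; congr (_ - _).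
have D : forall k, is_derive x v (gamma k 0 j *: (p (lshift m k) ^+ 2 + p (rshift m k) ^+ 2))
   (gamma k 0 j *: ((2%:R * p (lshift m k) x ^+ 1) *: v 0 (lshift m k)
                   + (2%:R * p (rshift m k) x ^+ 1) *: v 0 (rshift m k))).
  move=> k; apply: is_deriveZ; apply: is_deriveD; apply: is_deriveX; exact: is_derive_coord.
have D2 := is_deriveB (is_derive_sum D) (is_derive_cst (delta 0 j) x v).
rewrite E (@derive_val _ _ _ _ _ _ _ D2).
rewrite subr0; apply: eq_bigr => k _ /=.
rewrite /p /GRing.scale /= !expr1 -!mulrA !mulr_natl //.
Qed.

Definition GS {m d} (gamma : 'I_m -> 'rV[R]_d) (z : 'rV[R[i]]_m) : 'M[R]_(m, d) :=
  \matrix_(k < m, j < d) (if z 0 k != 0 then gamma k 0 j else 0).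

Lemma nondeg_full m d (gamma : 'I_m -> 'rV[R]_d) delta z :
  nondegenerateZ gamma delta -> Zset gamma delta z -> row_full (GS gamma z).
Proof.
move=> nd hz; have := nd z hz; rewrite /row_free /row_full.
set G := \matrix_(j < d, i < m + m) _.
have xl : forall k, realify z 0 (lshift m k) = complex.Re (z 0 k).
  by move=> k; rewrite /realify row_mxEl mxE.
have xr : forall k, realify z 0 (rshift m k) = complex.Im (z 0 k).
  by move=> k; rewrite /realify row_mxEr mxE.
pose B : 'M[R]_(m, m + m) := \matrix_(k, i) ((complex.Re (z 0 k) * ('e_i : 'rV[R]_(m + m)) 0 (lshift m k)) *+ 2
                             + (complex.Im (z 0 k) * ('e_i : 'rV[R]_(m + m)) 0 (rshift m k)) *+ 2).
have GE : G = (GS gamma z)^T *m B.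
  apply/matrixP => j i; rewrite mxE [grad _ _]/grad mxE derive_deffun mxE.
  apply: eq_bigr => k _; rewrite xl xr [(GS _ _)^T _ _]mxE [GS _ _ _ _]mxE [B _ _]mxE.
  have [zk|zk] := eqVneq (z 0 k) 0; last by [].
  by rewrite zk /= !mul0r mul0rn addr0 mulr0.
move=> /eqP rG; apply/eqP/anti_leq/andP; split; first exact: rank_leq_col.
rewrite -{1}rG GE -[X in (_ <= X)%N]mxrank_tr; exact: mxrankM_maxl.
Qed.


Definition boxi (K : nat) (u : R) : 'I_K.+1 := inord `|Num.floor (K.+1%:R * u)|%N.

Lemma box_close (K : nat) (u v : R) : 0 <= u < 1 -> 0 <= v < 1 ->
  boxi K u = boxi K v -> `|u - v| < K.+1%:R^-1.
Proof.
have H : forall w : R, 0 <= w < 1 -> (`|Num.floor (K.+1%:R * w)|%N < K.+1)%N /\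
   (Num.floor (K.+1%:R * w) >= 0).
  move=> w /andP[w0 w1]; have fge : 0 <= Num.floor (K.+1%:R * w).
    by rewrite floor_ge0 mulr_ge0.
  split=> //; rewrite -ltz_nat gez0_abs // floor_lt_int.
  by rewrite -[X in _ < X]mulr1 ltr_pM2l.
move=> hu hv; rewrite /boxi => /(congr1 val) /=.
have [hu1 hu2] := H _ hu; have [hv1 hv2] := H _ hv.
rewrite !inordK // => /(congr1 Posz); rewrite !gez0_abs // => e.
have := floor_itv (K.+1%:R * u); have := floor_itv (K.+1%:R * v).
rewrite e intrD /= => /andP[a1 a2] /andP[b1 b2].
have Kp : 0 < K.+1%:R :> R by [].
set k : R := K.+1%:R in a1 a2 b1 b2 Kp *.
have kk : k * k^-1 = 1 by rewrite mulfV // gt_eqF.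
have ki : 0 < k^-1 by rewrite invr_gt0.
move: a1 a2 b1 b2; set A : R := (Num.floor (k * v))%:~R; rewrite (_ : 1%:~R = 1) // => a1 a2 b1 b2.
have h1 : k * (u - v) < 1 by lra.
have h2 : k * (v - u) < 1 by lra.
rewrite ltr_norml; apply/andP; split.
  by rewrite ltrNl opprB -(ltr_pM2l Kp) kk.
by rewrite -(ltr_pM2l Kp) kk.
Qed.

Lemma dirichlet m d (gamma : 'I_m -> 'rV[R]_d) (P : pred 'I_m)
  (c : 'I_m -> 'I_m -> R) (eps : R) :
  0 < eps -> (forall v, Zspan gamma v -> v != 0 -> eps <= `|v|) ->
  (forall k, gamma k = \sum_(i < m | P i) c k i *: gamma i) ->
  exists2 N : nat, (0 < N)%N & forall k, Zspan_on gamma P (gamma k *+ N).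
Proof.
move=> e0 hd hc.
pose C := \sum_(i < m | P i) `|gamma i|.
have C0 : 0 <= C by apply: sumr_ge0 => i _.
pose K := Num.truncn (C / eps).
have KC : C * K.+1%:R^-1 < eps.
  have /andP[_] := truncn_itv (divr_ge0 C0 (ltW e0)).
  by rewrite -/K ltr_pdivrMr // mulrC ltr_pdivrMr.
pose fr (q : nat) k i := q%:R * c k i - (Num.floor (q%:R * c k i))%:~R.
have frI q k i : 0 <= fr q k i < 1.
  have /andP[h1 h2] := floor_itv (q%:R * c k i).
  rewrite /fr subr_ge0 h1 /= ltrBlDl addrC.
  by move: h2; rewrite intrD (_ : 1%:~R = 1) // addrC.
pose f := fun q : 'I_(K.+1 ^ (#|{: 'I_m * 'I_m}|)).+1 =>
  [ffun p : 'I_m * 'I_m => boxi K (fr q p.1 p.2)].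
have ninj : ~~ injectiveb f.
  apply/negP => /injectiveP /leq_card; rewrite card_ffun !card_ord.
  by rewrite ltnn.
have [a [b [ab hab]]] : exists a b : nat, (a < b)%N /\
    forall k i, boxi K (fr a k i) = boxi K (fr b k i).
  case/injectivePn: ninj => x [y xy fxy].
  have hxy k i : boxi K (fr x k i) = boxi K (fr y k i).
    by have := congr1 (fun g : {ffun 'I_m * 'I_m -> 'I_K.+1} => g (k, i)) fxy; rewrite !ffunE.
  case: (ltngtP x y) => [lt|gt|eq].
  - by exists x, y.
  - by exists y, x; split=> // k i; rewrite hxy.
  - by move: xy; rewrite (val_inj eq) eqxx.
exists (b - a)%N; first by rewrite subn_gt0.
move=> k.
pose e i := Num.floor (b%:R * c k i) - Num.floor (a%:R * c k i).
exists e.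
pose w := gamma k *+ (b - a) - \sum_(i < m | P i) gamma i *~ e i.
suff: w = 0 by move/eqP; rewrite subr_eq0 => /eqP.
have gen : forall (B A x F1 F2 : R), (B - A) * x - (F1 - F2) = B * x - F1 - (A * x - F2).
  by move=> *; ring.
have wE : w = \sum_(i < m | P i) (fr b k i - fr a k i) *: gamma i.
  rewrite /w {1}hc -scaler_nat scaler_sumr -sumrB; apply: eq_bigr => i _.
  rewrite scalerA -scaler_int -scalerBl; congr (_ *: _).
  rewrite /fr /e (natrB _ (ltnW ab)) rmorphB; apply: gen.


have wZ : Zspan gamma w.
  exists (fun i => (if i == k then (b - a)%N%:Z else 0) - (if P i then e i else 0)).
  rewrite (eq_bigr _ (fun i _ => mulrzBr _ _ _)) sumrB /w; congr (_ - _).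
  + rewrite (bigD1 k) //= eqxx big1 ?addr0 ?pmulrn // => i /negbTE ->.
    by rewrite mulr0z.
  + rewrite big_mkcond /=; apply: eq_bigr => i _; case: (P i) => //.
apply/eqP; apply: contraT => wn0.
have h1 := hd _ wZ wn0.
have h2 : `|w| < eps.
  rewrite wE; apply: le_lt_trans (ler_norm_sum _ _ _) _.
  apply: le_lt_trans KC.
  rewrite /C mulr_suml; apply: ler_sum => i Pi.
  rewrite normrZ mulrC; apply: ler_wpM2l; first exact: normr_ge0.
  apply: ltW; apply: box_close; rewrite ?frI //; exact: esym (hab k i).
by have := lt_le_trans h2 h1; rewrite ltxx.
Qed.

Lemma dotvMn d (l v : 'rV[R]_d) N : dotv l (v *+ N) = dotv l v *+ N.
Proof.
rewrite /dotv -sumrMnl; apply: eq_bigr => j _.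
by rewrite mulmxnE mulrnAr.
Qed.

Lemma part2 m d (gamma : 'I_m -> 'rV[R]_d) delta z :
  (exists2 eps : R, 0 < eps & forall v, Zspan gamma v -> v != 0 -> eps <= `|v|) ->
  nondegenerateZ gamma delta -> Zset gamma delta z ->
  finite_set (stabiliserT gamma z).
Proof.
move=> [eps e0 hd] nd hz.
have rf := nondeg_full _ _ _ _ _ nd hz.
have hc0 : forall k, exists c : 'I_m -> R,
    gamma k = \sum_(i < m | z 0 i != 0) c i *: gamma i.
  move=> k; have /submxP [D hD] := submx_full (gamma k) rf.
  exists (fun i => D 0 i); rewrite hD mulmx_sum_row [RHS]big_mkcond /=.
  apply: eq_bigr => i _; case: ifP => Pi.
    by congr (_ *: _); apply/rowP => j; rewrite !mxE Pi.
  have -> : row i (GS gamma z) = 0 by apply/rowP => j; rewrite !mxE Pi.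
  by rewrite scaler0.
have [c hc] := boolp.choice hc0.
have [N N0 hN] := dirichlet _ _ _ _ _ _ e0 hd hc.
pose F := fun r : {ffun 'I_m -> 'I_N} =>
  (\row_(k < m) expi (2 * pi * ((r k)%:R / N%:R)) : 'rV[R[i]]_m).
apply: (@sub_finite_set _ _ (F @` setT)); last exact: finite_image finite_finset.
move=> t; rewrite part1 => -[phi hphi <-].
have hr : forall k, exists r : 'I_N,
    torus_map gamma phi 0 k = expi (2 * pi * ((r : nat)%:R / N%:R)).
  move=> k; have [n hn] := hphi _ (hN k).
  rewrite dotvMn in hn.
  have Nz : (N%:Z != 0) by rewrite eqz_nat -lt0n.
  have Np : (0 < N%:Z) by rewrite ltz_nat.
  have r0 := modz_ge0 n Nz.
  have rN := ltz_pmod n Np.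
  have rlt : (`|(n %% N%:Z)%Z|%N < N)%N by rewrite -ltz_nat gez0_abs.
  exists (Ordinal rlt); rewrite mxE /=.
  have NR : (N%:R : R) != 0 by rewrite pnatr_eq0 -lt0n.
  have -> : dotv (gamma k) phi = n%:~R / N%:R.
    by rewrite dotvC -hn -[_ *+ N]mulr_natr mulfK.
  have nE : (n%:~R : R) = (n %/ N%:Z)%Z%:~R * N%:R + (n %% N%:Z)%Z%:~R.
    by rewrite {1}(divz_eq n N%:Z) rmorphD rmorphM.
  have nE' : (n%:~R / N%:R : R) = (n %/ N%:Z)%Z%:~R + (n %% N%:Z)%Z%:~R / N%:R.
    by rewrite nE mulrDl mulfK.
  rewrite nE' mulrDr expiD expi2pin mul1r.
  by rewrite -[in LHS](gez0_abs r0).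
have [g hg] := boolp.choice hr.
exists [ffun k => g k] => //.
by apply/rowP => k; rewrite mxE ffunE hg.
Qed.
End S.

Theorem lemma5p4 (R : realType) (m n : nat)
  (gamma : 'I_m -> 'rV[R]_(m - n)) (delta : 'rV[R]_(m - n)) :
  Zspan_lattice_of_rank gamma (m - n) ->
  (forall z, Zset gamma delta z ->
     stabiliserT gamma z = torus_map gamma @` dual_grp (L_of gamma z)) /\
  (nondegenerateZ gamma delta ->
     forall z, Zset gamma delta z -> finite_set (stabiliserT gamma z)).
Proof.
move=> [hd _]; split.
  by move=> z _; exact: part1.
by move=> nd z hz; exact: (part2 _ _ _ _ _ _ hd nd hz).
Qed.
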